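(* Let $G$ be a graph with no induced $P_7$, $C_4$, $C_6$ or $C_7$, let $H=(B_1,\dots,B_5)$ be a nice blowup of $C_5$ in $G$, and let $i\in\{1,\dots,5\}$. If $a-b-c$ is an induced path on three vertices with $a,b,c\in A_3(i)$, then $N_H(a)\subseteq N_H(b)$ and $N_H(c)\subseteq N_H(b)$.
   Context: Indices modulo $5$. A nice blowup of $C_5$ is a tuple $(B_1,\dots,B_5)$ of pairwise disjoint cliques such that every vertex of $B_j$ has a neighbor in $B_{j-1}$ and in $B_{j+1}$, $B_j$ is anticomplete to $B_{j+2}$, and there are no $a\in B_j$, distinct $b,c\in B_{j+1}$, $d\in B_{j+2}$ with $G[\{a,b,c,d\}]\cong P_4$; $V(H)=\bigcup B_j$. For $v\notin V(H)$, $\operatorname{supp}(v)$ is the set of $j$ such that $v$ has a neighbor in $B_j$; $A_3(i)=\{v\notin V(H):\operatorname{supp}(v)=\{i-1,i,i+1\}\}$; $N_H(v)$ is the set of neighbors of $v$ in $V(H)$. *)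

(* Defs.v *)
(* Simple graph: symmetric irreflexive relation e on a finType T.
   Indices mod 5 are 'I_5 = {0,...,4}, successor ordS, predecessor ord_pred. *)
From mathcomp Require Import all_boot.
Set Implicit Arguments. Unset Strict Implicit. Unset Printing Implicit Defensive.

Section Graphs.
Variables (T : finType) (e : rel T).

Definition induced_path (k : nat) (f : 'I_k -> T) : Prop :=
  injective f /\
  forall i j : 'I_k, e (f i) (f j) = ((i.+1 == j :> nat) || (j.+1 == i :> nat)).

Definition induced_cycle (k : nat) (f : 'I_k -> T) : Prop :=
  injective f /\
  forall i j : 'I_k, e (f i) (f j) = ((ordS i == j) || (ordS j == i)).

Definition has_induced_P (k : nat) : Prop := exists f : 'I_k -> T, induced_path f.
Definition has_induced_C (k : nat) : Prop := exists f : 'I_k -> T, induced_cycle f.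

Definition clique (A : {set T}) : Prop := {in A &, forall x y, x != y -> e x y}.
Definition anticomplete (A B : {set T}) : Prop := {in A & B, forall x y, ~~ e x y}.

Definition induces_P4 (S : {set T}) : Prop :=
  exists f : 'I_4 -> T, induced_path f /\ f @: setT = S.

Definition nxt (j : 'I_5) : 'I_5 := ordS j.
Definition prv (j : 'I_5) : 'I_5 := ord_pred j.

Definition nice_blowup (B : 'I_5 -> {set T}) : Prop :=
  [/\ (forall j k : 'I_5, j != k -> [disjoint B j & B k]),
      (forall j, clique (B j)),
      (forall j, {in B j, forall v,
          (exists2 u, u \in B (prv j) & e v u) /\ (exists2 u, u \in B (nxt j) & e v u)}),
      (forall j, anticomplete (B j) (B (nxt (nxt j))))
    & (forall j a b c d, a \in B j -> b \in B (nxt j) -> c \in B (nxt j) -> b != c ->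
          d \in B (nxt (nxt j)) -> ~ induces_P4 [set a; b; c; d])].

Definition VH (B : 'I_5 -> {set T}) : {set T} := \bigcup_(j : 'I_5) B j.
Definition supp (B : 'I_5 -> {set T}) (v : T) : {set 'I_5} :=
  [set j | [exists u in B j, e v u]].
Definition A3 (B : 'I_5 -> {set T}) (i : 'I_5) : {set T} :=
  [set v | (v \notin VH B) && (supp B v == [set prv i; i; nxt i])].
Definition NH (B : 'I_5 -> {set T}) (v : T) : {set T} := [set u in VH B | e v u].

End Graphs.

(* Main.v *)
Require Import Defs.
From mathcomp Require Import all_boot.
Set Implicit Arguments. Unset Strict Implicit. Unset Printing Implicit Defensive.

Definition Rc (k : nat) (i j : 'I_k) := (ordS i == j) || (ordS j == i).
Definition Rp (k : nat) (i j : 'I_k) := (i.+1 == j :> nat) || (j.+1 == i :> nat).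

Lemma sep6c (i j : 'I_6) : (forall k, Rc k i = Rc k j) -> i = j.
Proof.
move=> H; apply/eqP; move: (H (@Ordinal 6 0 isT)) (H (@Ordinal 6 1 isT)) (H (@Ordinal 6 2 isT)) (H (@Ordinal 6 3 isT)) (H (@Ordinal 6 4 isT)) (H (@Ordinal 6 5 isT)).
clear H; by case: i => [[|[|[|[|[|[|?]]]]]] ?] //; case: j => [[|[|[|[|[|[|?]]]]]] ?].
Qed.
Lemma sep7c (i j : 'I_7) : (forall k, Rc k i = Rc k j) -> i = j.
Proof.
move=> H; apply/eqP; move: (H (@Ordinal 7 0 isT)) (H (@Ordinal 7 1 isT)) (H (@Ordinal 7 2 isT)) (H (@Ordinal 7 3 isT)) (H (@Ordinal 7 4 isT)) (H (@Ordinal 7 5 isT)) (H (@Ordinal 7 6 isT)).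
clear H; by case: i => [[|[|[|[|[|[|[|?]]]]]]] ?] //; case: j => [[|[|[|[|[|[|[|?]]]]]]] ?].
Qed.
Lemma sep7p (i j : 'I_7) : (forall k, Rp k i = Rp k j) -> i = j.
Proof.
move=> H; apply/eqP; move: (H (@Ordinal 7 0 isT)) (H (@Ordinal 7 1 isT)) (H (@Ordinal 7 2 isT)) (H (@Ordinal 7 3 isT)) (H (@Ordinal 7 4 isT)) (H (@Ordinal 7 5 isT)) (H (@Ordinal 7 6 isT)).
clear H; by case: i => [[|[|[|[|[|[|[|?]]]]]]] ?] //; case: j => [[|[|[|[|[|[|[|?]]]]]]] ?].
Qed.
Lemma mkC4 (T : finType) (e : rel T) (e_sym : symmetric e) (e_irr : irreflexive e) (v0 v1 v2 v3 : T)
  (H01 : e v0 v1) (H02 : ~~ e v0 v2) (H03 : e v0 v3) (H12 : e v1 v2) (H13 : ~~ e v1 v3) (H23 : e v2 v3) (D02 : v0 != v2) (D13 : v1 != v3) :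
  has_induced_C e 4.
Proof.
pose f := fun i : 'I_4 => nth v0 [:: v0; v1; v2; v3] i.
have E01 : e v0 v1 = true by []. have E10 : e v1 v0 = true by rewrite e_sym.
have E02 : e v0 v2 = false by apply: negbTE. have E20 : e v2 v0 = false by rewrite e_sym; apply: negbTE.
have E03 : e v0 v3 = true by []. have E30 : e v3 v0 = true by rewrite e_sym.
have E12 : e v1 v2 = true by []. have E21 : e v2 v1 = true by rewrite e_sym.
have E13 : e v1 v3 = false by apply: negbTE. have E31 : e v3 v1 = false by rewrite e_sym; apply: negbTE.
have E23 : e v2 v3 = true by []. have E32 : e v3 v2 = true by rewrite e_sym.
have EQ : forall i j : 'I_4, e (f i) (f j) = Rc i j.
  by case=> [[|[|[|[|?]]]] ?] //; case=> [[|[|[|[|?]]]] ?] //; rewrite /f /Rc /= ?e_irr ?E01 ?E10 ?E02 ?E20 ?E03 ?E30 ?E12 ?E21 ?E13 ?E31 ?E23 ?E32.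
exists f; split; last exact: EQ.
move=> i j Hij; apply/eqP; move: Hij.
case: i => [[|[|[|[|?]]]] ?] //; case: j => [[|[|[|[|?]]]] ?] //; rewrite /f /= => Hij //;
  first [ by rewrite Hij e_irr in E01 | by rewrite Hij e_irr in E12 | by rewrite Hij e_irr in E23 | by rewrite Hij e_irr in E30 | by rewrite Hij eqxx in D02 | by rewrite Hij eqxx in D13 | by rewrite -Hij eqxx in D02 | by rewrite -Hij eqxx in D13 | by rewrite Hij e_irr in E10 | by rewrite Hij e_irr in E21 | by rewrite Hij e_irr in E32 | by rewrite Hij e_irr in E03 ].
Qed.
Lemma mkC6 (T : finType) (e : rel T) (e_sym : symmetric e) (e_irr : irreflexive e) (v0 v1 v2 v3 v4 v5 : T)
  (H01 : e v0 v1) (H02 : ~~ e v0 v2) (H03 : ~~ e v0 v3) (H04 : ~~ e v0 v4) (H05 : e v0 v5) (H12 : e v1 v2) (H13 : ~~ e v1 v3) (H14 : ~~ e v1 v4) (H15 : ~~ e v1 v5) (H23 : e v2 v3) (H24 : ~~ e v2 v4) (H25 : ~~ e v2 v5) (H34 : e v3 v4) (H35 : ~~ e v3 v5) (H45 : e v4 v5)  :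
  has_induced_C e 6.
Proof.
pose f := fun i : 'I_6 => nth v0 [:: v0; v1; v2; v3; v4; v5] i.
have E01 : e v0 v1 = true by []. have E10 : e v1 v0 = true by rewrite e_sym.
have E02 : e v0 v2 = false by apply: negbTE. have E20 : e v2 v0 = false by rewrite e_sym; apply: negbTE.
have E03 : e v0 v3 = false by apply: negbTE. have E30 : e v3 v0 = false by rewrite e_sym; apply: negbTE.
have E04 : e v0 v4 = false by apply: negbTE. have E40 : e v4 v0 = false by rewrite e_sym; apply: negbTE.
have E05 : e v0 v5 = true by []. have E50 : e v5 v0 = true by rewrite e_sym.
have E12 : e v1 v2 = true by []. have E21 : e v2 v1 = true by rewrite e_sym.
have E13 : e v1 v3 = false by apply: negbTE. have E31 : e v3 v1 = false by rewrite e_sym; apply: negbTE.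
have E14 : e v1 v4 = false by apply: negbTE. have E41 : e v4 v1 = false by rewrite e_sym; apply: negbTE.
have E15 : e v1 v5 = false by apply: negbTE. have E51 : e v5 v1 = false by rewrite e_sym; apply: negbTE.
have E23 : e v2 v3 = true by []. have E32 : e v3 v2 = true by rewrite e_sym.
have E24 : e v2 v4 = false by apply: negbTE. have E42 : e v4 v2 = false by rewrite e_sym; apply: negbTE.
have E25 : e v2 v5 = false by apply: negbTE. have E52 : e v5 v2 = false by rewrite e_sym; apply: negbTE.
have E34 : e v3 v4 = true by []. have E43 : e v4 v3 = true by rewrite e_sym.
have E35 : e v3 v5 = false by apply: negbTE. have E53 : e v5 v3 = false by rewrite e_sym; apply: negbTE.
have E45 : e v4 v5 = true by []. have E54 : e v5 v4 = true by rewrite e_sym.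
have EQ : forall i j : 'I_6, e (f i) (f j) = Rc i j.
  by case=> [[|[|[|[|[|[|?]]]]]] ?] //; case=> [[|[|[|[|[|[|?]]]]]] ?] //; rewrite /f /Rc /= ?e_irr ?E01 ?E10 ?E02 ?E20 ?E03 ?E30 ?E04 ?E40 ?E05 ?E50 ?E12 ?E21 ?E13 ?E31 ?E14 ?E41 ?E15 ?E51 ?E23 ?E32 ?E24 ?E42 ?E25 ?E52 ?E34 ?E43 ?E35 ?E53 ?E45 ?E54.
exists f; split; last exact: EQ.
move=> i j Hij; apply: sep6c => k; by rewrite -!EQ Hij.
Qed.
Lemma mkC7 (T : finType) (e : rel T) (e_sym : symmetric e) (e_irr : irreflexive e) (v0 v1 v2 v3 v4 v5 v6 : T)
  (H01 : e v0 v1) (H02 : ~~ e v0 v2) (H03 : ~~ e v0 v3) (H04 : ~~ e v0 v4) (H05 : ~~ e v0 v5) (H06 : e v0 v6) (H12 : e v1 v2) (H13 : ~~ e v1 v3) (H14 : ~~ e v1 v4) (H15 : ~~ e v1 v5) (H16 : ~~ e v1 v6) (H23 : e v2 v3) (H24 : ~~ e v2 v4) (H25 : ~~ e v2 v5) (H26 : ~~ e v2 v6) (H34 : e v3 v4) (H35 : ~~ e v3 v5) (H36 : ~~ e v3 v6) (H45 : e v4 v5) (H46 : ~~ e v4 v6) (H56 : e v5 v6)  :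
  has_induced_C e 7.
Proof.
pose f := fun i : 'I_7 => nth v0 [:: v0; v1; v2; v3; v4; v5; v6] i.
have E01 : e v0 v1 = true by []. have E10 : e v1 v0 = true by rewrite e_sym.
have E02 : e v0 v2 = false by apply: negbTE. have E20 : e v2 v0 = false by rewrite e_sym; apply: negbTE.
have E03 : e v0 v3 = false by apply: negbTE. have E30 : e v3 v0 = false by rewrite e_sym; apply: negbTE.
have E04 : e v0 v4 = false by apply: negbTE. have E40 : e v4 v0 = false by rewrite e_sym; apply: negbTE.
have E05 : e v0 v5 = false by apply: negbTE. have E50 : e v5 v0 = false by rewrite e_sym; apply: negbTE.
have E06 : e v0 v6 = true by []. have E60 : e v6 v0 = true by rewrite e_sym.
have E12 : e v1 v2 = true by []. have E21 : e v2 v1 = true by rewrite e_sym.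
have E13 : e v1 v3 = false by apply: negbTE. have E31 : e v3 v1 = false by rewrite e_sym; apply: negbTE.
have E14 : e v1 v4 = false by apply: negbTE. have E41 : e v4 v1 = false by rewrite e_sym; apply: negbTE.
have E15 : e v1 v5 = false by apply: negbTE. have E51 : e v5 v1 = false by rewrite e_sym; apply: negbTE.
have E16 : e v1 v6 = false by apply: negbTE. have E61 : e v6 v1 = false by rewrite e_sym; apply: negbTE.
have E23 : e v2 v3 = true by []. have E32 : e v3 v2 = true by rewrite e_sym.
have E24 : e v2 v4 = false by apply: negbTE. have E42 : e v4 v2 = false by rewrite e_sym; apply: negbTE.
have E25 : e v2 v5 = false by apply: negbTE. have E52 : e v5 v2 = false by rewrite e_sym; apply: negbTE.
have E26 : e v2 v6 = false by apply: negbTE. have E62 : e v6 v2 = false by rewrite e_sym; apply: negbTE.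
have E34 : e v3 v4 = true by []. have E43 : e v4 v3 = true by rewrite e_sym.
have E35 : e v3 v5 = false by apply: negbTE. have E53 : e v5 v3 = false by rewrite e_sym; apply: negbTE.
have E36 : e v3 v6 = false by apply: negbTE. have E63 : e v6 v3 = false by rewrite e_sym; apply: negbTE.
have E45 : e v4 v5 = true by []. have E54 : e v5 v4 = true by rewrite e_sym.
have E46 : e v4 v6 = false by apply: negbTE. have E64 : e v6 v4 = false by rewrite e_sym; apply: negbTE.
have E56 : e v5 v6 = true by []. have E65 : e v6 v5 = true by rewrite e_sym.
have EQ : forall i j : 'I_7, e (f i) (f j) = Rc i j.
  by case=> [[|[|[|[|[|[|[|?]]]]]]] ?] //; case=> [[|[|[|[|[|[|[|?]]]]]]] ?] //; rewrite /f /Rc /= ?e_irr ?E01 ?E10 ?E02 ?E20 ?E03 ?E30 ?E04 ?E40 ?E05 ?E50 ?E06 ?E60 ?E12 ?E21 ?E13 ?E31 ?E14 ?E41 ?E15 ?E51 ?E16 ?E61 ?E23 ?E32 ?E24 ?E42 ?E25 ?E52 ?E26 ?E62 ?E34 ?E43 ?E35 ?E53 ?E36 ?E63 ?E45 ?E54 ?E46 ?E64 ?E56 ?E65.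
exists f; split; last exact: EQ.
move=> i j Hij; apply: sep7c => k; by rewrite -!EQ Hij.
Qed.
Lemma mkP7 (T : finType) (e : rel T) (e_sym : symmetric e) (e_irr : irreflexive e) (v0 v1 v2 v3 v4 v5 v6 : T)
  (H01 : e v0 v1) (H02 : ~~ e v0 v2) (H03 : ~~ e v0 v3) (H04 : ~~ e v0 v4) (H05 : ~~ e v0 v5) (H06 : ~~ e v0 v6) (H12 : e v1 v2) (H13 : ~~ e v1 v3) (H14 : ~~ e v1 v4) (H15 : ~~ e v1 v5) (H16 : ~~ e v1 v6) (H23 : e v2 v3) (H24 : ~~ e v2 v4) (H25 : ~~ e v2 v5) (H26 : ~~ e v2 v6) (H34 : e v3 v4) (H35 : ~~ e v3 v5) (H36 : ~~ e v3 v6) (H45 : e v4 v5) (H46 : ~~ e v4 v6) (H56 : e v5 v6)  :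
  has_induced_P e 7.
Proof.
pose f := fun i : 'I_7 => nth v0 [:: v0; v1; v2; v3; v4; v5; v6] i.
have E01 : e v0 v1 = true by []. have E10 : e v1 v0 = true by rewrite e_sym.
have E02 : e v0 v2 = false by apply: negbTE. have E20 : e v2 v0 = false by rewrite e_sym; apply: negbTE.
have E03 : e v0 v3 = false by apply: negbTE. have E30 : e v3 v0 = false by rewrite e_sym; apply: negbTE.
have E04 : e v0 v4 = false by apply: negbTE. have E40 : e v4 v0 = false by rewrite e_sym; apply: negbTE.
have E05 : e v0 v5 = false by apply: negbTE. have E50 : e v5 v0 = false by rewrite e_sym; apply: negbTE.
have E06 : e v0 v6 = false by apply: negbTE. have E60 : e v6 v0 = false by rewrite e_sym; apply: negbTE.
have E12 : e v1 v2 = true by []. have E21 : e v2 v1 = true by rewrite e_sym.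
have E13 : e v1 v3 = false by apply: negbTE. have E31 : e v3 v1 = false by rewrite e_sym; apply: negbTE.
have E14 : e v1 v4 = false by apply: negbTE. have E41 : e v4 v1 = false by rewrite e_sym; apply: negbTE.
have E15 : e v1 v5 = false by apply: negbTE. have E51 : e v5 v1 = false by rewrite e_sym; apply: negbTE.
have E16 : e v1 v6 = false by apply: negbTE. have E61 : e v6 v1 = false by rewrite e_sym; apply: negbTE.
have E23 : e v2 v3 = true by []. have E32 : e v3 v2 = true by rewrite e_sym.
have E24 : e v2 v4 = false by apply: negbTE. have E42 : e v4 v2 = false by rewrite e_sym; apply: negbTE.
have E25 : e v2 v5 = false by apply: negbTE. have E52 : e v5 v2 = false by rewrite e_sym; apply: negbTE.
have E26 : e v2 v6 = false by apply: negbTE. have E62 : e v6 v2 = false by rewrite e_sym; apply: negbTE.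
have E34 : e v3 v4 = true by []. have E43 : e v4 v3 = true by rewrite e_sym.
have E35 : e v3 v5 = false by apply: negbTE. have E53 : e v5 v3 = false by rewrite e_sym; apply: negbTE.
have E36 : e v3 v6 = false by apply: negbTE. have E63 : e v6 v3 = false by rewrite e_sym; apply: negbTE.
have E45 : e v4 v5 = true by []. have E54 : e v5 v4 = true by rewrite e_sym.
have E46 : e v4 v6 = false by apply: negbTE. have E64 : e v6 v4 = false by rewrite e_sym; apply: negbTE.
have E56 : e v5 v6 = true by []. have E65 : e v6 v5 = true by rewrite e_sym.
have EQ : forall i j : 'I_7, e (f i) (f j) = Rp i j.
  by case=> [[|[|[|[|[|[|[|?]]]]]]] ?] //; case=> [[|[|[|[|[|[|[|?]]]]]]] ?] //; rewrite /f /Rp /= ?e_irr ?E01 ?E10 ?E02 ?E20 ?E03 ?E30 ?E04 ?E40 ?E05 ?E50 ?E06 ?E60 ?E12 ?E21 ?E13 ?E31 ?E14 ?E41 ?E15 ?E51 ?E16 ?E61 ?E23 ?E32 ?E24 ?E42 ?E25 ?E52 ?E26 ?E62 ?E34 ?E43 ?E35 ?E53 ?E36 ?E63 ?E45 ?E54 ?E46 ?E64 ?E56 ?E65.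
exists f; split; last exact: EQ.
move=> i j Hij; apply: sep7p => k; by rewrite -!EQ Hij.
Qed.

Arguments mkC4 {T e} e_sym e_irr v0 v1 v2 v3.
Arguments mkC6 {T e} e_sym e_irr v0 v1 v2 v3 v4 v5.
Arguments mkC7 {T e} e_sym e_irr v0 v1 v2 v3 v4 v5 v6.
Arguments mkP7 {T e} e_sym e_irr v0 v1 v2 v3 v4 v5 v6.

Record blocks (T : finType) (e : rel T) (C0 C1 C2 C3 C4 : {set T}) : Prop := Blocks {
  cl0 : clique e C0; cl1 : clique e C1; cl2 : clique e C2; cl3 : clique e C3; cl4 : clique e C4;
  an02 : anticomplete e C0 C2; an13 : anticomplete e C1 C3; an24 : anticomplete e C2 C4;
  an30 : anticomplete e C3 C0; an41 : anticomplete e C4 C1;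
  dj01 : [disjoint C0 & C1]; dj02 : [disjoint C0 & C2]; dj03 : [disjoint C0 & C3];
  dj04 : [disjoint C0 & C4]; dj12 : [disjoint C1 & C2]; dj13 : [disjoint C1 & C3];
  dj14 : [disjoint C1 & C4]; dj23 : [disjoint C2 & C3]; dj24 : [disjoint C2 & C4];
  dj34 : [disjoint C3 & C4];
  nb01 : {in C0, forall v, exists2 u, u \in C1 & e v u};
  nb04 : {in C0, forall v, exists2 u, u \in C4 & e v u};
  nb10 : {in C1, forall v, exists2 u, u \in C0 & e v u};
  nb12 : {in C1, forall v, exists2 u, u \in C2 & e v u};
  nb21 : {in C2, forall v, exists2 u, u \in C1 & e v u};
  nb23 : {in C2, forall v, exists2 u, u \in C3 & e v u};
  nb32 : {in C3, forall v, exists2 u, u \in C2 & e v u};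
  nb34 : {in C3, forall v, exists2 u, u \in C4 & e v u};
  nb43 : {in C4, forall v, exists2 u, u \in C3 & e v u};
  nb40 : {in C4, forall v, exists2 u, u \in C0 & e v u} }.

Record a3v (T : finType) (e : rel T) (C0 C1 C2 C3 C4 : {set T}) (v : T) : Prop := A3v {
  nin0 : v \notin C0; nin1 : v \notin C1; nin2 : v \notin C2; nin3 : v \notin C3; nin4 : v \notin C4;
  ne4 : exists2 u, u \in C4 & e v u;
  ne0 : exists2 u, u \in C0 & e v u;
  ne1 : exists2 u, u \in C1 & e v u;
  no2 : {in C2, forall u, ~~ e v u};
  no3 : {in C3, forall u, ~~ e v u} }.

Lemma anti_sym (T : finType) (e : rel T) (e_sym : symmetric e) (A B : {set T}) :
  anticomplete e A B -> anticomplete e B A.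
Proof. by move=> H u v Hu Hv; rewrite e_sym; apply: H. Qed.

Lemma blocks_mirror (T : finType) (e : rel T) (e_sym : symmetric e) C0 C1 C2 C3 C4 :
  blocks e C0 C1 C2 C3 C4 -> blocks e C0 C4 C3 C2 C1.
Proof.
case=> *; constructor => //; try (apply: anti_sym => //); try (rewrite disjoint_sym //).
Qed.

Lemma a3v_mirror (T : finType) (e : rel T) C0 C1 C2 C3 C4 v :
  a3v e C0 C1 C2 C3 C4 v -> a3v e C0 C4 C3 C2 C1 v.
Proof. by case=> *; constructor. Qed.

Lemma dj_neq (T : finType) (A B : {set T}) u v : [disjoint A & B] -> u \in A -> v \in B -> u != v.
Proof. move=> D Hu Hv; apply/eqP => E; subst v; by rewrite (disjointFr D Hu) in Hv. Qed.

Lemma nin_neq (T : finType) (A : {set T}) u v : u \notin A -> v \in A -> u != v.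
Proof. by move=> Hu Hv; apply/eqP => E; subst v; rewrite Hv in Hu. Qed.

Lemma adj_neq (T : finType) (e : rel T) w u v : e w u -> ~~ e w v -> u != v.
Proof. by move=> H1 H2; apply/eqP => E; subst v; rewrite H1 in H2. Qed.

Ltac neqt hC :=
  first [ assumption | rewrite eq_sym; assumption
  | (apply: nin_neq; [ (apply: nin0 + apply: nin1 + apply: nin2 + apply: nin3 + apply: nin4); eassumption | assumption ])
  | (rewrite eq_sym; apply: nin_neq; [ (apply: nin0 + apply: nin1 + apply: nin2 + apply: nin3 + apply: nin4); eassumption | assumption ])
  | (apply: dj_neq; [ (apply: (dj01 hC) + apply: (dj02 hC) + apply: (dj03 hC) + apply: (dj04 hC) + apply: (dj12 hC) + apply: (dj13 hC) + apply: (dj14 hC) + apply: (dj23 hC) + apply: (dj24 hC) + apply: (dj34 hC)) | assumption | assumption ])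
  | (rewrite eq_sym; apply: dj_neq; [ (apply: (dj01 hC) + apply: (dj02 hC) + apply: (dj03 hC) + apply: (dj04 hC) + apply: (dj12 hC) + apply: (dj13 hC) + apply: (dj14 hC) + apply: (dj23 hC) + apply: (dj24 hC) + apply: (dj34 hC)) | assumption | assumption ])
  ].

Ltac fact e_sym hC :=
  first [ assumption | (rewrite e_sym; assumption)
  | neqt hC
  | (apply: (an02 hC); assumption) | (apply: (an13 hC); assumption) | (apply: (an24 hC); assumption)
  | (apply: (an30 hC); assumption) | (apply: (an41 hC); assumption)
  | (rewrite e_sym; first [ (apply: (an02 hC); assumption) | (apply: (an13 hC); assumption) | (apply: (an24 hC); assumption)
     | (apply: (an30 hC); assumption) | (apply: (an41 hC); assumption) ])
  | (apply: no2; [eassumption | assumption]) | (apply: no3; [eassumption | assumption])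
  | (rewrite e_sym; first [ (apply: no2; [eassumption | assumption]) | (apply: no3; [eassumption | assumption]) ])
  | (apply: (cl0 hC); [assumption | assumption | neqt hC])
  | (apply: (cl1 hC); [assumption | assumption | neqt hC])
  | (apply: (cl2 hC); [assumption | assumption | neqt hC])
  | (apply: (cl3 hC); [assumption | assumption | neqt hC])
  | (apply: (cl4 hC); [assumption | assumption | neqt hC])
  ].

Lemma caseA (T : finType) (e : rel T) (e_sym : symmetric e) (e_irr : irreflexive e)
  (noP7 : ~ has_induced_P e 7) (noC4 : ~ has_induced_C e 4)
  (noC6 : ~ has_induced_C e 6) (noC7 : ~ has_induced_C e 7)
  C0 C1 C2 C3 C4 (hC : blocks e C0 C1 C2 C3 C4) a b c
  (ha : a3v e C0 C1 C2 C3 C4 a) (hb : a3v e C0 C1 C2 C3 C4 b) (hc : a3v e C0 C1 C2 C3 C4 c)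
  (ab : e a b) (bc : e b c) (nac : ~~ e a c) (dac : a != c) x (xC1 : x \in C1) (ax : e a x) :
  e b x.
Proof.
apply/negPn/negP => nbx.
have ncx : ~~ e c x.
  apply/negP => cx; apply: noC4; apply: (mkC4 e_sym e_irr a b c x); fact e_sym hC.
have [t tC4 ct] := ne4 hc.
have [at_|nat] := boolP (e a t).
  have bt : e b t.
    apply/negPn/negP => nbt; apply: noC4; apply: (mkC4 e_sym e_irr a b c t); fact e_sym hC.
  have [y yC1 bY] := ne1 hb.
  have yx : y != x by apply: (adj_neq bY nbx).
  have ay : e a y.
    apply/negPn/negP => nay; apply: noC4; apply: (mkC4 e_sym e_irr a x y b); fact e_sym hC.
  have ncy : ~~ e c y.
    apply/negP => cy; apply: noC4; apply: (mkC4 e_sym e_irr c y a t); fact e_sym hC.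
  have [y' y'C1 cy'] := ne1 hc.
  have y'x : y' != x by apply: (adj_neq cy' ncx).
  have nay' : ~~ e a y'.
    apply/negP => ay'; apply: noC4; apply: (mkC4 e_sym e_irr a y' c t); fact e_sym hC.
  have y'y : y' != y by apply: (adj_neq cy' ncy).
  have [by'|nby'] := boolP (e b y').
    apply: noC4; apply: (mkC4 e_sym e_irr a b y' x); fact e_sym hC.
  apply: noC4; apply: (mkC4 e_sym e_irr b c y' y); fact e_sym hC.
have [z zC2 xz] := nb12 hC xC1.
have [w wC3 tw] := nb43 hC tC4.
have [zw|nzw] := boolP (e z w).
  have [bt|nbt] := boolP (e b t).
    apply: noC6; apply: (mkC6 e_sym e_irr b t w z x a); fact e_sym hC.
  apply: noC7; apply: (mkC7 e_sym e_irr c b a x z w t); fact e_sym hC.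
have [w' w'C3 zw'] := nb23 hC zC2.
have w'w : w' != w by apply: (adj_neq zw' nzw).
apply: noP7; apply: (mkP7 e_sym e_irr c b a x z w' w); fact e_sym hC.
Qed.

Lemma caseC (T : finType) (e : rel T) (e_sym : symmetric e) (e_irr : irreflexive e)
  (noP7 : ~ has_induced_P e 7) (noC4 : ~ has_induced_C e 4)
  (noC6 : ~ has_induced_C e 6) (noC7 : ~ has_induced_C e 7)
  C0 C1 C2 C3 C4 (hC : blocks e C0 C1 C2 C3 C4) a b c
  (ha : a3v e C0 C1 C2 C3 C4 a) (hb : a3v e C0 C1 C2 C3 C4 b) (hc : a3v e C0 C1 C2 C3 C4 c)
  (ab : e a b) (bc : e b c) (nac : ~~ e a c) (dac : a != c) x (xC0 : x \in C0) (ax : e a x) :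
  e b x.
Proof.
have A1 := caseA e_sym e_irr noP7 noC4 noC6 noC7 hC ha hb hc ab bc nac dac.
have A4 := caseA e_sym e_irr noP7 noC4 noC6 noC7 (blocks_mirror e_sym hC)
  (a3v_mirror ha) (a3v_mirror hb) (a3v_mirror hc) ab bc nac dac.
apply/negPn/negP => nbx.
have [u uC4 au] := ne4 ha.
have [v vC1 av] := ne1 ha.
have bu : e b u := A4 u uC4 au.
have bv : e b v := A1 v vC1 av.
have [q qC4 [xq bq]] : exists2 q, q \in C4 & (e x q /\ e b q).
  have [xu|nxu] := boolP (e x u); first by exists u.
  have [q qC4 xq] := nb04 hC xC0.
  have qu : q != u := adj_neq xq nxu.
  have aq : e a q.
    apply/negPn/negP => naq; apply: noC4; apply: (mkC4 e_sym e_irr a x q u); fact e_sym hC.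
  by exists q => //; split => //; apply: A4.
have nxv : ~~ e x v.
  apply/negP => xv; apply: noC4; apply: (mkC4 e_sym e_irr x v b q); fact e_sym hC.
have [p pC1 xp] := nb01 hC xC0.
have pv : p != v := adj_neq xp nxv.
have ap : e a p.
  apply/negPn/negP => nap; apply: noC4; apply: (mkC4 e_sym e_irr a x p v); fact e_sym hC.
have bp := A1 p pC1 ap.
apply: noC4; apply: (mkC4 e_sym e_irr b p x q); fact e_sym hC.
Qed.

Ltac idxt := case=> [[|[|[|[|[|?]]]]] ?] //; by apply/eqP.
Ltac idxn := case=> [[|[|[|[|[|?]]]]] ?] //.

Lemma ix1 : forall i : 'I_5, nxt (nxt (nxt i)) = prv (prv i). Proof. idxt. Qed.
Lemma ix2 : forall i : 'I_5, nxt (nxt (prv i)) = nxt i. Proof. idxt. Qed.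
Lemma ix3 : forall i : 'I_5, nxt (nxt (nxt (nxt i))) = prv i. Proof. idxt. Qed.
Lemma ix4 : forall i : 'I_5, nxt (nxt (prv (prv i))) = i. Proof. idxt. Qed.
Lemma ix5 : forall i : 'I_5, prv (nxt i) = i. Proof. idxt. Qed.
Lemma ix6 : forall i : 'I_5, prv (prv (prv i)) = nxt (nxt i). Proof. idxt. Qed.
Lemma ix7 : forall i : 'I_5, nxt (prv (prv i)) = prv i. Proof. idxt. Qed.
Lemma ix8 : forall i : 'I_5, nxt (prv i) = i. Proof. idxt. Qed.

Lemma dn01 : forall i : 'I_5, i != nxt i. Proof. idxn. Qed.
Lemma dn02 : forall i : 'I_5, i != nxt (nxt i). Proof. idxn. Qed.
Lemma dn03 : forall i : 'I_5, i != prv (prv i). Proof. idxn. Qed.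
Lemma dn04 : forall i : 'I_5, i != prv i. Proof. idxn. Qed.
Lemma dn12 : forall i : 'I_5, nxt i != nxt (nxt i). Proof. idxn. Qed.
Lemma dn13 : forall i : 'I_5, nxt i != prv (prv i). Proof. idxn. Qed.
Lemma dn14 : forall i : 'I_5, nxt i != prv i. Proof. idxn. Qed.
Lemma dn23 : forall i : 'I_5, nxt (nxt i) != prv (prv i). Proof. idxn. Qed.
Lemma dn24 : forall i : 'I_5, nxt (nxt i) != prv i. Proof. idxn. Qed.
Lemma dn34 : forall i : 'I_5, prv (prv i) != prv i. Proof. idxn. Qed.
Lemma nsup2 : forall i : 'I_5, nxt (nxt i) \notin [set prv i; i; nxt i].
Proof. by idxn; rewrite !inE. Qed.
Lemma nsup3 : forall i : 'I_5, prv (prv i) \notin [set prv i; i; nxt i].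
Proof. by idxn; rewrite !inE. Qed.

Lemma blocks_of (T : finType) (e : rel T) (B : 'I_5 -> {set T}) (hB : nice_blowup e B) (i : 'I_5) :
  blocks e (B i) (B (nxt i)) (B (nxt (nxt i))) (B (prv (prv i))) (B (prv i)).
Proof.
case: hB => hdj hcl hnb han _.
constructor => //.
- by have := han (nxt i); rewrite ix1.
- by have := han (nxt (nxt i)); rewrite ix3.
- by have := han (prv (prv i)); rewrite ix4.
- by have := han (prv i); rewrite ix2.
- exact: hdj (dn01 i).
- exact: hdj (dn02 i).
- exact: hdj (dn03 i).
- exact: hdj (dn04 i).
- exact: hdj (dn12 i).
- exact: hdj (dn13 i).
- exact: hdj (dn14 i).
- exact: hdj (dn23 i).
- exact: hdj (dn24 i).
- exact: hdj (dn34 i).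
- by move=> v Hv; case: (hnb i v Hv).
- by move=> v Hv; case: (hnb i v Hv).
- by move=> v Hv; case: (hnb (nxt i) v Hv); rewrite ix5.
- by move=> v Hv; case: (hnb (nxt i) v Hv).
- by move=> v Hv; case: (hnb (nxt (nxt i)) v Hv); rewrite ix5.
- by move=> v Hv; case: (hnb (nxt (nxt i)) v Hv); rewrite ix1.
- by move=> v Hv; case: (hnb (prv (prv i)) v Hv); rewrite ix6.
- by move=> v Hv; case: (hnb (prv (prv i)) v Hv); rewrite ix7.
- by move=> v Hv; case: (hnb (prv i) v Hv).
- by move=> v Hv; case: (hnb (prv i) v Hv); rewrite ix8.
Qed.

Lemma inVH (T : finType) (B : 'I_5 -> {set T}) j v : v \in B j -> v \in VH B.
Proof. by move=> Hv; apply/bigcupP; exists j. Qed.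

Lemma a3v_of (T : finType) (e : rel T) (B : 'I_5 -> {set T}) (i : 'I_5) v :
  v \in A3 e B i ->
  a3v e (B i) (B (nxt i)) (B (nxt (nxt i))) (B (prv (prv i))) (B (prv i)) v.
Proof.
rewrite inE => /andP [nH /eqP hs].
have nin j : v \notin B j by apply/negP => /inVH; rewrite (negbTE nH).
have ex j : j \in [set prv i; i; nxt i] -> exists2 u, u \in B j & e v u.
  by rewrite -hs inE => /existsP [u /andP [Hu Hvu]]; exists u.
have no j : j \notin [set prv i; i; nxt i] -> {in B j, forall u, ~~ e v u}.
  move=> Hj u Hu; apply/negP => Hvu; move: Hj; rewrite -hs inE.
  by move/existsP; apply; exists u; rewrite Hu.
constructor => //; try apply: ex; try apply: no; rewrite ?nsup2 ?nsup3 ?inE ?eqxx ?orbT //.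
Qed.

Lemma key (T : finType) (e : rel T) (e_sym : symmetric e) (e_irr : irreflexive e)
  (noP7 : ~ has_induced_P e 7) (noC4 : ~ has_induced_C e 4)
  (noC6 : ~ has_induced_C e 6) (noC7 : ~ has_induced_C e 7)
  (B : 'I_5 -> {set T}) (hB : nice_blowup e B) (i : 'I_5) (a b c : T) :
  a \in A3 e B i -> b \in A3 e B i -> c \in A3 e B i ->
  e a b -> e b c -> ~~ e a c -> a != c ->
  NH e B a \subset NH e B b.
Proof.
move=> Ha Hb Hc ab bc nac dac.
have hC := blocks_of hB i.
have ha := a3v_of Ha; have hb := a3v_of Hb; have hc := a3v_of Hc.
apply/subsetP => u; rewrite !inE => /andP [uH au]; rewrite uH /=.
case/bigcupP: uH => j _ uj.
move: Ha; rewrite inE => /andP [_ /eqP hs].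
have Hj : j \in [set prv i; i; nxt i].
  by rewrite -hs inE; apply/existsP; exists u; rewrite uj.
case: (eqVneq j (prv i)) => [Ej|n1].
  subst j; exact: (caseA e_sym e_irr noP7 noC4 noC6 noC7 (blocks_mirror e_sym hC)
    (a3v_mirror ha) (a3v_mirror hb) (a3v_mirror hc) ab bc nac dac uj au).
case: (eqVneq j i) => [Ej|n2].
  subst j; exact: (caseC e_sym e_irr noP7 noC4 noC6 noC7 hC ha hb hc ab bc nac dac uj au).
case: (eqVneq j (nxt i)) => [Ej|n3].
  subst j; exact: (caseA e_sym e_irr noP7 noC4 noC6 noC7 hC ha hb hc ab bc nac dac uj au).
by move: Hj; rewrite !inE (negbTE n1) (negbTE n2) (negbTE n3).
Qed.

Unset Implicit Arguments. Set Strict Implicit. Set Printing Implicit Defensive.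

Theorem lemma8p4 (T : finType) (e : rel T) (e_sym : symmetric e) (e_irr : irreflexive e)
  (noP7 : ~ has_induced_P e 7) (noC4 : ~ has_induced_C e 4)
  (noC6 : ~ has_induced_C e 6) (noC7 : ~ has_induced_C e 7)
  (B : 'I_5 -> {set T}) (hB : nice_blowup e B) (i : 'I_5) (a b c : T) :
  a \in A3 e B i -> b \in A3 e B i -> c \in A3 e B i ->
  e a b -> e b c -> ~~ e a c -> a != c ->
  NH e B a \subset NH e B b /\ NH e B c \subset NH e B b.
Proof.
move=> Ha Hb Hc ab bc nac dac; split.
  exact: (key e_sym e_irr noP7 noC4 noC6 noC7 hB Ha Hb Hc ab bc nac dac).
apply: (key e_sym e_irr noP7 noC4 noC6 noC7 hB Hc Hb Ha); rewrite 1?e_sym 1?eq_sym //.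
Qed.
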